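(* Let $q\ge4$ be even, let $\alpha,\beta\in\mathbb{F}_{q^2}$ with $\alpha\neq0$, $\beta\notin\mathbb{F}_q$ and $\alpha^{q+1}/(\beta^q+\beta)^2$ of absolute trace $0$, let $R=(0,\delta,1)$ and $U_\infty=(1,0,0)$. If $\ell$ is a line of $\mathrm{PG}(2,q^2)$ not through $U_\infty$, then $\ell$ meets $\mathrm{pedal}(R)$ in at most two points.
   Context: Points of $\mathrm{PG}(2,q^2)$ have homogeneous coordinates $(x,y,z)$. $\delta\in\mathbb{F}_{q^2}\setminus\mathbb{F}_q$ satisfies $\delta^q=1+\delta$ and $\delta^2=v+\delta$ with $v\in\mathbb{F}_q$, $v\ne1$, of absolute trace $1$. $\mathcal U_{\alpha\beta}=\{(x,\alpha x^2+\beta x^{q+1}+r,1): x\in\mathbb{F}_{q^2}, r\in\mathbb{F}_q\}\cup\{(0,1,0)\}$, which under the hypotheses is a unital (a set of $q^3+1$ points meeting every line in $1$ or $q+1$ points), and $R\notin\mathcal U_{\alpha\beta}$. For a point $P$ not on the unital, $\mathrm{pedal}(P)$ is the set of points of contact of the $q+1$ tangent lines (lines meeting the unital in exactly one point) through $P$. *)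

(* Defs.v *)
From HB Require Import structures.
From mathcomp Require Import all_boot all_order all_algebra all_field.
Set Implicit Arguments. Unset Strict Implicit. Unset Printing Implicit Defensive.
Import GRing.Theory.
Local Open Scope ring_scope.

(* Homogeneous coordinate triples (x,y,z) over a field; also used for line
   coordinates [a,b,c] (the line a X + b Y + c Z = 0). *)
Record pt (F : Type) := Pt { px : F; py : F; pz : F }.

Section Proj.
Variable F : fieldType.

Definition nz (P : pt F) : Prop := ~ (px P = 0 /\ py P = 0 /\ pz P = 0).

Definition prop (P Q : pt F) : Prop :=
  exists k : F, k != 0 /\ Q = Pt (k * px P) (k * py P) (k * pz P).

Definition incid (l P : pt F) : Prop :=
  px l * px P + py l * py P + pz l * pz P = 0.

Definition inFq (q : nat) (x : F) : Prop := x ^+ q = x.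

(* absolute trace (over F_2) of an element of F_q, q = 2^h *)
Definition abstr (h : nat) (x : F) : F := \sum_(i < h) x ^+ (2 ^ i).

Definition on_unital (q : nat) (alpha beta : F) (P : pt F) : Prop :=
  (exists (x r : F), inFq q r /\
     prop (Pt x (alpha * x ^+ 2 + beta * x ^+ (q + 1) + r) 1) P)
  \/ prop (Pt 0 1 0) P.

Definition tangent (q : nat) (alpha beta : F) (l : pt F) : Prop :=
  nz l /\ exists P, on_unital q alpha beta P /\ incid l P /\
    forall Q, on_unital q alpha beta Q -> incid l Q -> prop P Q.

Definition pedal (q : nat) (alpha beta : F) (R P : pt F) : Prop :=
  exists l, tangent q alpha beta l /\ incid l R /\
    on_unital q alpha beta P /\ incid l P.
End Proj.

(* Main.v *)
Require Import Defs.
From mathcomp Require Import all_boot all_order all_algebra all_field.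
From mathcomp Require Import ring.
Import GRing.Theory.
Local Open Scope ring_scope.

Lemma addxx {F : fieldType} (two : 2%:R = 0 :> F) (x : F) : x + x = 0.
Proof. by rewrite -mulr2n -mulr_natl two mul0r. Qed.
Lemma oppE {F : fieldType} (two : 2%:R = 0 :> F) (x : F) : - x = x.
Proof. by apply/eqP; rewrite eq_sym -subr_eq0 opprK (addxx two). Qed.
Lemma frD {F : fieldType} (two : 2%:R = 0 :> F) h (a b : F) : (a + b) ^+ (2 ^ h) = a ^+ (2 ^ h) + b ^+ (2 ^ h).
Proof.
elim: h a b => [|h IH] a b; first by rewrite !expr1.
by rewrite expnS !exprM sqrrD mulr2n (addxx two) addr0 IH.
Qed.
Lemma abstr_tele {F : fieldType} (two : 2%:R = 0 :> F) h (z : F) : abstr h (z ^+ 2 + z) = z ^+ (2 ^ h) + z.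
Proof.
rewrite /abstr; elim: h => [|h IH]; first by rewrite big_ord0 expr1 (addxx two).
rewrite big_ord_recr /= IH (frD two) -exprM -expnS.
apply: (@etrans _ _ (z ^+ (2 ^ h.+1) + z + (z ^+ (2^h) + z ^+ (2^h)))); first ring.
by rewrite (addxx two) addr0.
Qed.


Lemma char2_of {F : finFieldType} {q h} : #|F| = (q ^ 2)%N -> q = (2 ^ h)%N -> 2%:R = 0 :> F.
Proof.
move=> hF hq.
have : (2 \in [pchar F])%N by apply: (@card_finPcharP _ _ (h * 2)) => //; rewrite hF hq -expnM.
by move=> H; apply: pcharf0.
Qed.

Lemma frobK {F : finFieldType} {q} (x : F) : #|F| = (q ^ 2)%N -> (x ^+ q) ^+ q = x.
Proof. by move=> hF; rewrite -exprM mulnn -hF expf_card. Qed.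

Lemma aniso (F : finFieldType) q h (alpha beta u : F) :
  #|F| = (q ^ 2)%N -> q = (2 ^ h)%N -> ~ inFq q beta ->
  abstr h (alpha ^+ (q + 1) / (beta ^+ q + beta) ^+ 2) = 0 -> u != 0 ->
  alpha * u ^+ 2 + alpha ^+ q * (u ^+ q) ^+ 2 + (beta + beta ^+ q) * (u * u ^+ q) != 0.
Proof.
move=> hF hq hb htr hu; have two := char2_of hF hq.
set b' := beta ^+ q + beta.
have hb' : b' != 0.
  apply/negP => /eqP H; apply: hb; rewrite /inFq.
  have : beta ^+ q = - beta by apply/eqP; rewrite -addr_eq0 -/b' H.
  by rewrite oppE.
have hbq : b' ^+ q = b' by rewrite /b' hq frD // -hq (frobK _ hF) addrC.
set uq := u ^+ q.
have huq : uq != 0 by rewrite expf_neq0.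
apply/negP => /eqP E.
have E' : alpha * u ^+ 2 + alpha ^+ q * uq ^+ 2 = b' * (u * uq).
  apply/eqP; rewrite -subr_eq0 oppE // /b' (addrC (beta ^+ q)); exact/eqP.
pose z := alpha * u ^+ 2 / (b' * (u * uq)).
have zq : z ^+ q = alpha ^+ q * uq ^+ 2 / (b' * (u * uq)).
  rewrite /z exprMn exprVn !exprMn hbq exprAC (frobK _ hF) -/uq; field.
  by rewrite hb' hu huq.
have S : z + z ^+ q = 1.
  by rewrite zq /z -mulrDl E' divff // !mulf_neq0.
have hsum : z ^+ q = 1 + z.
  by rewrite -{1}S addrC addrA addxx // add0r.
have hz2 : z ^+ 2 + z = alpha ^+ (q + 1) / b' ^+ 2.
  have -> : z ^+ 2 + z = z * (1 + z) by ring.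
  rewrite -hsum zq /z addn1 (exprSr alpha q); field.
  by rewrite hb' hu huq.
move: htr; rewrite -/b' -hz2 abstr_tele // -hq hsum -addrA addxx // addr0 => /eqP.
by rewrite oner_eq0.
Qed.

Lemma key_id (F : comNzRingType) (two : 2%:R = 0 :> F)
  (X Xq V Vq mu a aq b bq r0 d : F) :
  (a*X^+2+bq*(Xq*X)+r0+d)*V = d ->
  (aq*Xq^+2+b*(X*Xq)+r0+(1+d))*Vq = 1+d ->
  mu*(a*X^+2*V^+2+aq*Xq^+2*Vq^+2+(b+bq)*X*Xq*V*Vq) = 1 ->
  (1+d)+(1 + mu*Vq)*((aq*Xq^+2+bq*(X*Xq)+r0)+(1+d))+aq*((1 + mu*Vq)*Xq)^+2+bq*(((1 + mu*V)*X)*((1 + mu*Vq)*Xq))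
  = d+(1 + mu*V)*((a*X^+2+b*(Xq*X)+r0)+d)+a*((1 + mu*V)*X)^+2+b*(((1 + mu*Vq)*Xq)*((1 + mu*V)*X)).
Proof.
move=> H1 H2 H3; apply/eqP; rewrite -subr_eq0; apply/eqP.
match goal with |- ?G = 0 => have HE : G = mu*((a*X^+2+bq*(Xq*X)+r0+d)*V-d)+mu*((aq*Xq^+2+b*(X*Xq)+r0+(1+d))*Vq-(1+d))+mu*(mu*(a*X^+2*V^+2+aq*Xq^+2*Vq^+2+(b+bq)*X*Xq*V*Vq)-1) + 2%:R * (1%:R - V*Vq*X*Xq*b*mu^+2 - V*X*Xq*b*mu - 2%:R*V*X^+2*a*mu - V*d*mu - V*mu*r0 - V^+2*X^+2*a*mu^+2 - Vq*X*Xq*b*mu + Vq*X*Xq*bq*mu + Vq*Xq^+2*aq*mu - X*Xq*b + X*Xq*bq - X^+2*a + Xq^+2*aq + d*mu + mu) by ring end.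
by rewrite H1 H2 H3 !subrr !mulr0 two mul0r !addr0 in HE.
Qed.

Lemma incid_id (F : comNzRingType) (two : 2%:R = 0 :> F) (l1 l2 l3 t X Xq tq a b r0 d : F) :
  l1*X + l2*(a*X^+2 + b*(Xq*X) + r0) + l3 = 0 -> l2*d + l3 = 0 ->
  l1*(t*X) + l2*(a*(t*X)^+2 + b*((tq*Xq)*(t*X)) + (d + t*((a*X^+2+b*(Xq*X)+r0)+d) + a*(t*X)^+2 + b*((tq*Xq)*(t*X)))) + l3 = 0.
Proof.
move=> H1 H2.
match goal with |- ?G = 0 => have HE : G = t * (l1*X + l2*(a*X^+2 + b*(Xq*X) + r0) + l3) + (1 + t) * (l2*d + l3) + 2%:R * (l2*(a*(t*X)^+2 + b*((tq*Xq)*(t*X))) - t * l3) by ring end.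
by rewrite H1 H2 two !mulr0 !mul0r !addr0 in HE.
Qed.

Lemma prop_refl {F : fieldType} (A : pt F) : prop A A.
Proof. by exists 1; split; [exact: oner_neq0 | case: A => x y z; rewrite !mul1r]. Qed.

Lemma prop_st {F : fieldType} {A B C : pt F} : prop A B -> prop A C -> prop B C.
Proof.
move=> [k [hk ->]] [k' [hk' ->]]; exists (k' / k); split.
  by rewrite mulf_neq0 // invr_eq0.
by rewrite /= !mulrA !divfK.
Qed.

Lemma pedal_char (F : finFieldType) (q h : nat) (alpha beta delta : F) (P : pt F) :
  #|F| = (q ^ 2)%N -> q = (2 ^ h)%N -> ~ inFq q beta ->
  abstr h (alpha ^+ (q + 1) / (beta ^+ q + beta) ^+ 2) = 0 ->
  ~ inFq q delta -> delta ^+ q = 1 + delta ->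
  pedal q alpha beta (Pt 0 delta 1) P ->
  exists x0 r0, prop (Pt x0 (alpha * x0 ^+ 2 + beta * x0 ^+ (q + 1) + r0) 1) P /\ r0 ^+ q = r0 /\
     alpha * x0 ^+ 2 + beta ^+ q * (x0 ^+ q * x0) + r0 + delta = 0.
Proof.
move=> hF hq hb htr hd hdq [l' [[nzl [P0 [UP0 [iP0 huq]]]] [iR [UP iP]]]].
have two := char2_of hF hq.
have frq : forall a b : F, (a + b) ^+ q = a ^+ q + b ^+ q by move=> a b; rewrite hq frD.
have eX : forall z : F, z ^+ (q + 1) = z ^+ q * z by move=> z; rewrite addn1 exprSr.
have noV : py l' = 0 -> pz l' = 0 -> False.
  move=> h2 h3.
  have U1 : on_unital q alpha beta (Pt 0 1 0) by right; exact: prop_refl.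
  have U2 : on_unital q alpha beta (Pt 0 1 1).
    left; exists 0, 1; split; first by rewrite /inFq expr1n.
    by exists 1; split; [exact: oner_neq0 | rewrite eX expr2 !mul0r !mulr0 !add0r !mul1r].
  have I1 : incid l' (Pt 0 1 0) by rewrite /incid /= h2 h3 !mul0r !mulr0 !addr0.
  have I2 : incid l' (Pt 0 1 1) by rewrite /incid /= h2 h3 !mul0r !mulr0 !addr0.
  have [k [_ /= ]] := prop_st (huq _ U1 I1) (huq _ U2 I2).
  by case=> _ _ /eqP; rewrite mulr0 oner_eq0.
case: UP => [[x0 [r0 [hr0 hP]]] | hP]; last first.
  exfalso; case: hP => k [hk HP]; move: iP iR; rewrite HP /incid /= !mulr0 !mulr1 !add0r addr0.
  move=> /eqP; rewrite mulf_eq0 (negbTE hk) orbF => /eqP h2.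
  by rewrite h2 mul0r add0r => h3; exact: noV.
exists x0, r0; split => //; split => //.
have hP' := hP; case: hP' => k [hk HP].
move: iP iR; rewrite HP /incid /= !mulr0 !mulr1 add0r.
set l1 := px l'; set l2 := py l'; set l3 := pz l'.
move=> iP iR.
have iP' : l1 * x0 + l2 * (alpha * x0 ^+ 2 + beta * (x0 ^+ q * x0) + r0) + l3 = 0.
  have : k * (l1 * x0 + l2 * (alpha * x0 ^+ 2 + beta * (x0 ^+ q * x0) + r0) + l3) = 0.
    by rewrite -iP -eX; ring.
  by move/eqP; rewrite mulf_eq0 (negbTE hk) /= => /eqP.
have hd0 : delta != 0.
  by apply/negP => /eqP d0; apply: hd; rewrite /inFq d0 expr0n hq expn_eq0.
set c := alpha * x0 ^+ 2 + beta ^+ q * (x0 ^+ q * x0) + r0 + delta.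
case: (eqVneq c 0) => // hc; exfalso.
case: (eqVneq x0 0) => hx0.
  move: iP'; rewrite hx0 expr0n /= !mulr0 !add0r => iP'.
  have : l2 * (r0 - delta) = 0.
    have E : l2 * (r0 - delta) = (l2 * r0 + l3) - (l2 * delta + l3) by ring.
    by rewrite E iP' iR subrr.
  move/eqP; rewrite mulf_eq0 subr_eq0 => /orP [/eqP l20|/eqP rd].
    by apply: noV => //; move: iR; rewrite l20 mul0r add0r.
  by apply: hd; rewrite /inFq -rd.
pose V := delta / c.
have hV : V != 0 by rewrite mulf_neq0 // invr_eq0.
have H1 : (alpha * x0 ^+ 2 + beta ^+ q * (x0 ^+ q * x0) + r0 + delta) * V = delta.
  by rewrite -/c /V mulrC divfK.
clearbody V.
have fK : forall z : F, (z ^+ q) ^+ q = z by move=> z; exact: frobK.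
have cq : c ^+ q = alpha ^+ q * (x0 ^+ q) ^+ 2 + beta * (x0 * x0 ^+ q) + r0 + (1 + delta).
  by rewrite /c !frq !exprMn !fK hr0 hdq expr2.
have H2 : (alpha ^+ q * (x0 ^+ q) ^+ 2 + beta * (x0 * x0 ^+ q) + r0 + (1 + delta)) * V ^+ q = 1 + delta.
  by rewrite -cq -exprMn -/c (_ : c * V = delta) // -hdq.
pose Qv := alpha * x0 ^+ 2 * V ^+ 2 + alpha ^+ q * (x0 ^+ q) ^+ 2 * (V ^+ q) ^+ 2 + (beta + beta ^+ q) * x0 * x0 ^+ q * V * V ^+ q.
have hQ : Qv != 0.
  have := @aniso F q h alpha beta (x0 * V) hF hq hb htr (mulf_neq0 hx0 hV).
  have E : alpha * (x0 * V) ^+ 2 + alpha ^+ q * ((x0 * V) ^+ q) ^+ 2 + (beta + beta ^+ q) * ((x0 * V) * (x0 * V) ^+ q) = Qv.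
    by rewrite /Qv !exprMn; ring.
  by rewrite E.
pose mu := Qv^-1.
have H3 : mu * Qv = 1 by rewrite /mu mulVf.
have hmu : mu ^+ q = mu.
  rewrite /mu exprVn; congr (_^-1).
  by rewrite /Qv !frq !exprMn !fK frq fK; ring.
have K := @key_id _ two x0 (x0^+q) V (V^+q) mu alpha (alpha^+q) beta (beta^+q) r0 delta H1 H2 H3.
have hmu0 : mu != 0 by rewrite /mu invr_eq0.
clearbody mu.
pose r := delta + (1 + mu*V)*((alpha*x0^+2 + beta*(x0^+q*x0) + r0) + delta) + alpha*((1 + mu*V)*x0)^+2 + beta*(((1 + mu*V^+q)*x0^+q)*((1 + mu*V)*x0)).
have hr : r ^+ q = r.
  rewrite {2}/r -K /r.
  do ![rewrite frq | rewrite exprMn | rewrite fK].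
  by rewrite expr1n hmu hr0 hdq; ring.
have U2 : on_unital q alpha beta (Pt ((1 + mu*V)*x0) (alpha*((1 + mu*V)*x0)^+2 + beta*((1 + mu*V)*x0)^+(q+1) + r) 1).
  by left; exists ((1 + mu*V)*x0), r; split => //; exact: prop_refl.
have e1 : ((1 + mu*V)*x0)^+(q+1) = ((1 + mu*V^+q)*x0^+q)*((1+mu*V)*x0).
  by rewrite eX exprMn frq expr1n exprMn hmu.
have I2 : incid l' (Pt ((1 + mu*V)*x0) (alpha*((1 + mu*V)*x0)^+2 + beta*((1 + mu*V)*x0)^+(q+1) + r) 1).
  rewrite /incid /= mulr1 e1 -/l1 -/l2 -/l3.
  rewrite /r; exact: (@incid_id _ two l1 l2 l3 (1+mu*V) x0 (x0^+q) (1+mu*V^+q) alpha beta r0 delta iP' iR).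
have UP : on_unital q alpha beta P by left; exists x0, r0.
have IP : incid l' P by rewrite HP /incid /= mulr1.
have [m [hm E]] := prop_st (huq _ UP IP) (huq _ U2 I2).
move: E; rewrite HP /=; case=> ex _ ez.
have : mu * V * x0 = 0.
  have -> : mu * V * x0 = (1 + mu * V) * x0 - (m * (k * 1)) * x0 by rewrite -ez; ring.
  by rewrite ex; apply/eqP; rewrite subr_eq0; apply/eqP; ring.
by move/eqP; rewrite !mulf_eq0 (negbTE hmu0) (negbTE hV) (negbTE hx0).
Qed.


Lemma three_roots (F : fieldType) (A0 A1 A2 T1 T2 T3 : F) : A2 != 0 ->
  A0 + A1 * T1 + A2 * T1 ^+ 2 = 0 -> A0 + A1 * T2 + A2 * T2 ^+ 2 = 0 ->
  A0 + A1 * T3 + A2 * T3 ^+ 2 = 0 -> T1 = T2 \/ T1 = T3 \/ T2 = T3.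
Proof.
move=> hA e1 e2 e3.
case: (eqVneq T1 T2) => [->|n12]; first by left.
case: (eqVneq T1 T3) => [->|n13]; first by right; left.
right; right.
have f12 : (T1 - T2) * (A1 + A2 * (T1 + T2)) = 0.
  have E : (T1 - T2) * (A1 + A2 * (T1 + T2)) = (A0 + A1 * T1 + A2 * T1 ^+ 2) - (A0 + A1 * T2 + A2 * T2 ^+ 2) by ring.
  by rewrite E e1 e2 subrr.
have f13 : (T1 - T3) * (A1 + A2 * (T1 + T3)) = 0.
  have E : (T1 - T3) * (A1 + A2 * (T1 + T3)) = (A0 + A1 * T1 + A2 * T1 ^+ 2) - (A0 + A1 * T3 + A2 * T3 ^+ 2) by ring.
  by rewrite E e1 e3 subrr.
move/eqP: f12; rewrite mulf_eq0 subr_eq0 (negbTE n12) /= => /eqP g2.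
move/eqP: f13; rewrite mulf_eq0 subr_eq0 (negbTE n13) /= => /eqP g3.
have : A2 * (T2 - T3) = 0.
  have E : A2 * (T2 - T3) = (A1 + A2 * (T1 + T2)) - (A1 + A2 * (T1 + T3)) by ring.
  by rewrite E g2 g3 subrr.
by move/eqP; rewrite mulf_eq0 (negbTE hA) subr_eq0 => /eqP.
Qed.

Lemma final3 (F : fieldType) (two : 2%:R = 0 :> F) (k m kq mq a aq b x1 x2 x3 xq1 xq2 xq3 T1 T2 T3 : F) :
  (m != 0 -> a * m^+2 + aq * mq^+2 + b * (m * mq) != 0) ->
  x1 = k + m * T1 -> xq1 = kq + mq * T1 -> 1 + a * x1^+2 + aq * xq1^+2 + b * (x1 * xq1) = 0 ->
  x2 = k + m * T2 -> xq2 = kq + mq * T2 -> 1 + a * x2^+2 + aq * xq2^+2 + b * (x2 * xq2) = 0 ->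
  x3 = k + m * T3 -> xq3 = kq + mq * T3 -> 1 + a * x3^+2 + aq * xq3^+2 + b * (x3 * xq3) = 0 ->
  x1 = x2 \/ x1 = x3 \/ x2 = x3.
Proof.
move=> hA e1 f1 K1 e2 f2 K2 e3 f3 K3.
case: (eqVneq m 0) => [m0 | hm].
  by left; rewrite e1 e2 m0 !mul0r.
have quad : forall x xq T, x = k + m * T -> xq = kq + mq * T -> 1 + a * x^+2 + aq * xq^+2 + b * (x * xq) = 0 ->
  (1 + a * k^+2 + aq * kq^+2 + b * (k * kq)) + (b * (k * mq + kq * m))  *  T + (a * m^+2 + aq * mq^+2 + b * (m * mq))  *  T^+2 = 0.
  move=> x xq T ex exq H.
  have E : (1 + a * k^+2 + aq * kq^+2 + b * (k * kq)) + (b * (k * mq + kq * m))  *  T + (a * m^+2 + aq * mq^+2 + b * (m * mq))  *  T^+2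
     = (1 + a * x^+2 + aq * xq^+2 + b * (x * xq)) - 2%:R  *  (a * k * m * T + aq * kq * mq * T) by rewrite ex exq; ring.
  by rewrite E H two mul0r subr0.
have [t12|[t13|t23]] := @three_roots _ _ _ _ _ _ _ (hA hm) (quad _ _ _ e1 f1 K1) (quad _ _ _ e2 f2 K2) (quad _ _ _ e3 f3 K3).
- by left; rewrite e1 e2 t12.
- by right; left; rewrite e1 e3 t13.
- by right; right; rewrite e2 e3 t23.
Qed.

Lemma pt_facts (F : finFieldType) q h (alpha beta delta l1 l2 l3 m n x0 r0 : F) :
  #|F| = (q ^ 2)%N -> q = (2 ^ h)%N -> delta ^+ q = 1 + delta -> l1 != 0 -> l1 * m = l2 -> l1 * n = l3 ->
  r0 ^+ q = r0 -> alpha * x0 ^+ 2 + beta ^+ q * (x0 ^+ q * x0) + r0 + delta = 0 ->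
  l1 * x0 + l2 * (alpha * x0 ^+ 2 + beta * x0 ^+ (q + 1) + r0) + l3 = 0 ->
  exists T, [/\ x0 = (m * (1 + delta) + n) + m * T, x0 ^+ q = (m * (1 + delta) + n) ^+ q + m ^+ q * T,
     1 + alpha * x0 ^+ 2 + alpha ^+ q * (x0 ^+ q) ^+ 2 + (beta + beta ^+ q) * (x0 * x0 ^+ q) = 0 &
     alpha * x0 ^+ 2 + beta * x0 ^+ (q + 1) + r0 = delta + (beta + beta ^+ q) * (x0 ^+ q * x0)].
Proof.
move=> hF hq hdq hl1 hm hn hr0 hc hl.
have two := char2_of hF hq.
have frq : forall a b : F, (a + b) ^+ q = a ^+ q + b ^+ q by move=> a b; rewrite hq frD.
have fK : forall z : F, (z ^+ q) ^+ q = z by move=> z; exact: frobK.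
have eX : forall z : F, z ^+ (q + 1) = z ^+ q * z by move=> z; rewrite addn1 exprSr.
have c2 : forall x y z w : F, x - y = z + 2%:R * w -> z = 0 -> x = y.
  by move=> x y z w E z0; apply/eqP; rewrite -subr_eq0 E z0 two mul0r addr0.
have cB : alpha ^+ q * (x0 ^+ q * x0 ^+ q) + beta * (x0 * x0 ^+ q) + r0 + (1 + delta) = 0.
  have : (alpha * x0 ^+ 2 + beta ^+ q * (x0 ^+ q * x0) + r0 + delta) ^+ q = 0.
    by rewrite hc expr0n hq expn_eq0.
  by rewrite !frq !exprMn !fK hr0 hdq.
rewrite eX in hl.
exists (alpha * x0 ^+ 2 + alpha ^+ q * (x0 ^+ q) ^+ 2).
have ex : x0 = (m * (1 + delta) + n) + m * (alpha * x0 ^+ 2 + alpha ^+ q * (x0 ^+ q) ^+ 2).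
  have E : l1 * (x0 - ((m * (1 + delta) + n) + m * (alpha * x0 ^+ 2 + alpha ^+ q * (x0 ^+ q) ^+ 2)))
      = (l1 * x0 + l2 * (alpha * x0 ^+ 2 + beta * (x0 ^+ q * x0) + r0) + l3)
        - l2 * (alpha ^+ q * (x0 ^+ q * x0 ^+ q) + beta * (x0 * x0 ^+ q) + r0 + (1 + delta))
        - 2%:R * (l2 * (alpha * x0 ^+ 2) + l3).
    by rewrite -hm -hn; ring.
  move: E; rewrite hl cB two !mulr0 mul0r !subr0 => /eqP; rewrite mulf_eq0 (negbTE hl1) /= subr_eq0.
  by move/eqP.
split => //.
- have TqT : (alpha * x0 ^+ 2 + alpha ^+ q * (x0 ^+ q) ^+ 2) ^+ q = alpha * x0 ^+ 2 + alpha ^+ q * (x0 ^+ q) ^+ 2.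
    by rewrite frq !exprMn !fK; ring.
  by rewrite {1}ex frq exprMn TqT.
- apply: (c2 _ _ ((alpha * x0 ^+ 2 + beta ^+ q * (x0 ^+ q * x0) + r0 + delta) + (alpha ^+ q * (x0 ^+ q * x0 ^+ q) + beta * (x0 * x0 ^+ q) + r0 + (1 + delta))) (- (r0 + delta))).
    by ring.
  by rewrite hc cB addr0.
- apply: (c2 _ _ (alpha * x0 ^+ 2 + beta ^+ q * (x0 ^+ q * x0) + r0 + delta) (- (delta + beta ^+ q * (x0 ^+ q * x0)))).
    by rewrite eX; ring.
  by rewrite hc.
Qed.


Lemma aff_line {F : fieldType} {l P : pt F} {x y : F} :
  prop (Pt x y 1) P -> incid l P -> px l * x + py l * y + pz l = 0.
Proof.
move=> [k [hk ->]]; rewrite /incid /= => H.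
have : k * (px l * x + py l * y + pz l) = 0 by rewrite -H; ring.
by move/eqP; rewrite mulf_eq0 (negbTE hk) /= => /eqP.
Qed.

Theorem lemma3p4 (F : finFieldType) (q h : nat) (alpha beta delta v : F) :
  #|F| = (q ^ 2)%N -> q = (2 ^ h)%N -> (4 <= q)%N ->
  alpha != 0 -> ~ inFq q beta ->
  abstr h (alpha ^+ (q + 1) / (beta ^+ q + beta) ^+ 2) = 0 ->
  ~ inFq q delta -> delta ^+ q = 1 + delta -> delta ^+ 2 = v + delta ->
  inFq q v -> v != 1 -> abstr h v = 1 ->
  forall l P1 P2 P3 : pt F,
    nz l -> ~ incid l (Pt 1 0 0) ->
    pedal q alpha beta (Pt 0 delta 1) P1 -> incid l P1 ->
    pedal q alpha beta (Pt 0 delta 1) P2 -> incid l P2 ->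
    pedal q alpha beta (Pt 0 delta 1) P3 -> incid l P3 ->
    prop P1 P2 \/ prop P1 P3 \/ prop P2 P3.
Proof.
move=> hF hq _ _ hb htr hd hdq _ _ _ _ l P1 P2 P3 _ nl ped1 i1 ped2 i2 ped3 i3.
have two := char2_of hF hq.
have hl1 : px l != 0.
  by apply/negP => /eqP e; apply: nl; rewrite /incid /= e mul0r !mulr0 !addr0.
pose m := py l / px l; pose n := pz l / px l.
have hm : px l * m = py l by rewrite /m mulrC divfK.
have hn : px l * n = pz l by rewrite /n mulrC divfK.
have [x1 [r1 [hp1 [hr1 hc1]]]] := @pedal_char _ _ _ _ _ _ _ hF hq hb htr hd hdq ped1.
have [x2 [r2 [hp2 [hr2 hc2]]]] := @pedal_char _ _ _ _ _ _ _ hF hq hb htr hd hdq ped2.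
have [x3 [r3 [hp3 [hr3 hc3]]]] := @pedal_char _ _ _ _ _ _ _ hF hq hb htr hd hdq ped3.
have [T1 [ex1 exq1 K1 ey1]] := @pt_facts _ _ _ _ _ _ _ _ _ m n _ _ hF hq hdq hl1 hm hn hr1 hc1 (aff_line hp1 i1).
have [T2 [ex2 exq2 K2 ey2]] := @pt_facts _ _ _ _ _ _ _ _ _ m n _ _ hF hq hdq hl1 hm hn hr2 hc2 (aff_line hp2 i2).
have [T3 [ex3 exq3 K3 ey3]] := @pt_facts _ _ _ _ _ _ _ _ _ m n _ _ hF hq hdq hl1 hm hn hr3 hc3 (aff_line hp3 i3).
have hA : m != 0 -> alpha * m ^+ 2 + alpha ^+ q * (m ^+ q) ^+ 2 + (beta + beta ^+ q) * (m * m ^+ q) != 0.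
  by move=> hm0; exact: (@aniso _ _ _ _ _ _ hF hq hb htr hm0).
rewrite ey1 in hp1; rewrite ey2 in hp2; rewrite ey3 in hp3.
have [e|[e|e]] := @final3 _ two _ m _ (m ^+ q) alpha (alpha ^+ q) (beta + beta ^+ q) x1 x2 x3 (x1 ^+ q) (x2 ^+ q) (x3 ^+ q) T1 T2 T3 hA ex1 exq1 K1 ex2 exq2 K2 ex3 exq3 K3.
- by left; rewrite e in hp1; exact: prop_st hp1 hp2.
- by right; left; rewrite e in hp1; exact: prop_st hp1 hp3.
- by right; right; rewrite e in hp2; exact: prop_st hp2 hp3.
Qed.
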